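(* Let $A\subset\mathbb{R}$, let $f:A\to\mathbb{R}$ be a function and let $a,L\in\mathbb{R}$. Then $T_5\lim_{x\to a}f(x)=L$ if and only if there exist functions $g,h:A\to\mathbb{R}$ and a real $\delta_0>0$ such that $f(x)=g(x)+h(x)$ for all $x\in A$, $\lim_{x\to a}g(x)=L$, and the set $\left\{x\in\left((a-\delta_0,a+\delta_0)\setminus\{a\}\right)\cap A:\ h(x)\neq0\right\}$ is countable.
   Context: $T_5\lim_{x\to a}f(x)=L$ means: for every real $\varepsilon>0$ there exists a real $\delta_\varepsilon>0$ such that the set $\left\{x\in\left((a-\delta_{\varepsilon},a+\delta_{\varepsilon})\setminus\{a\}\right)\cap A:\ |f(x)-L|\geq\varepsilon\right\}$ is countable (finite or countably infinite). The statement $\lim_{x\to a}g(x)=L$ denotes the classical limit: for every $\varepsilon>0$ there is $\delta>0$ such that $|g(x)-L|<\varepsilon$ for all $x\in A$ with $0<|x-a|<\delta$. *)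

(* Defs.v *)
From mathcomp Require Import all_boot all_order all_algebra.
From mathcomp Require Import all_classical all_reals.
Set Implicit Arguments. Unset Strict Implicit. Unset Printing Implicit Defensive.
Import Order.TTheory GRing.Theory Num.Theory.
Local Open Scope ring_scope.
Local Open Scope classical_set_scope.

Definition classical_lim (R : realType) (A : set R) (g : R -> R) (a L : R) : Prop :=
  forall eps : R, 0 < eps -> exists delta : R, 0 < delta /\
    forall x, A x -> 0 < `|x - a| -> `|x - a| < delta -> `|g x - L| < eps.

Definition T5_lim (R : realType) (A : set R) (f : R -> R) (a L : R) : Prop :=
  forall eps : R, 0 < eps -> exists delta : R, 0 < delta /\
    countable [set x | a - delta < x < a + delta /\ x != a /\ A x
                       /\ eps <= `|f x - L|].

(* Main.v *)
Require Import Defs.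
From mathcomp Require Import all_boot all_order all_algebra.
From mathcomp Require Import all_classical all_reals.
From mathcomp Require Import ring lra.
Import Order.TTheory GRing.Theory Num.Theory.
Local Open Scope ring_scope.
Local Open Scope classical_set_scope.

Theorem theorem3 (R : realType) (A : set R) (f : R -> R) (a L : R) :
  T5_lim A f a L <->
  exists (g h : R -> R) (delta0 : R),
    0 < delta0 /\
    (forall x, A x -> f x = g x + h x) /\
    classical_lim A g a L /\
    countable [set x | a - delta0 < x < a + delta0 /\ x != a /\ A x /\ h x != 0].
Proof.
split; last first.
  move=> [g [h [d0 [d0pos [fgh [glim hc]]]]]] eps epos.
  have [d [dpos Hd]] := glim eps epos.
  exists (Num.min d d0); split; first by rewrite lt_min dpos d0pos.
  apply: sub_countable hc; apply: subset_card_le.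
  move=> x /= [/andP [x1 x2] [xa [Ax ex]]].
  have hmin1 : Num.min d d0 <= d0 by rewrite ge_min lexx orbT.
  have hmin2 : Num.min d d0 <= d by rewrite ge_min lexx.
  split; first (apply/andP; split).
  - by lra.
  - by lra.
  split => //; split => //.
  apply/negP => /eqP h0.
  have := Hd x Ax.
  rewrite normr_gt0 subr_eq0 xa => /(_ isT).
  have xd : `|x - a| < d.
    apply: (lt_le_trans _ hmin2); rewrite ltr_norml; apply/andP; split.
    - by lra.
    - by lra.
  move=> /(_ xd); move: ex; rewrite fgh // h0 addr0 => ex.
  by rewrite ltNge ex.
move=> T5.
have : forall n : nat, exists d : R, 0 < d /\
  countable [set x | a - d < x < a + d /\ x != a /\ A x /\ (n.+1%:R)^-1 <= `|f x - L|].
  by move=> n; apply: T5; rewrite invr_gt0 ltr0n.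
move=> /choice [D HD].
pose S := \bigcup_(n in [set: nat]) [set x | a - D n < x < a + D n /\ x != a /\ A x /\ (n.+1%:R)^-1 <= `|f x - L|].
have Sc : countable S.
  apply: bigcup_countable; first exact: countableP.
  by move=> n _; case: (HD n).
pose h := fun x => if x \in S then f x - L else 0.
exists (fun x => f x - h x), h, 1; split; first exact: ltr01.
split; first by move=> x _; rewrite subrK.
split; last first.
  apply: sub_countable Sc; apply: subset_card_le.
  move=> x /= [_ [_ [_]]]; rewrite /h; case: ifP => [|_]; last by rewrite eqxx.
  by rewrite in_setE.
move=> eps epos.
pose n := Num.truncn (eps^-1).
have nlt : (n.+1%:R)^-1 < eps.
  rewrite -invf_plt ?posrE ?ltr0n //; exact: truncnS_gt.
exists (D n); split; first by case: (HD n).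
move=> x Ax xa xd; rewrite /h; case: ifPn => xS.
  have -> : f x - (f x - L) - L = 0 by ring.
  by rewrite normr0.
rewrite subr0; rewrite ltNge; apply/negP => le.
move/negP: xS; apply; rewrite in_setE; exists n => //.
split; last by split; [by move: xa; rewrite normr_gt0 subr_eq0| split => //; exact: (le_trans (ltW nlt) le)].
move: xd; rewrite ltr_norml => /andP [l1 l2]; apply/andP; split.
- by lra.
- by lra.
Qed.
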